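(* Let $J$ be a finite nonempty index set, $\alpha\in(0,1/4]$, $D\ge0$, and let $T$ be a positive integer with $\alpha^2T\ge\ln(|J|+2.5\,T D|J|)$. Let $w^1\in\mathbb R^J$ have $w^1_j=1$ for all $j$. Suppose that for $i=1,\dots,T$ we are given (possibly depending on everything before) vectors $g^i,\tilde w^i\in\mathbb R^J$ satisfying $\|g^i\|_\infty\le2$, $\|w^i-\tilde w^i\|_\infty\le D$, and $\langle g^i,\tilde w^i\rangle\le0$, and we set $w^{i+1}_j=w^i_j(1+\alpha g^i_j)$ for all $j\in J$. Then $\frac1T\sum_{i=1}^T g^i_j\le5\alpha$ for every $j\in J$. *)

(* Defs.v *)
From mathcomp Require Import all_boot all_order all_algebra.
From mathcomp Require Import all_classical all_reals exp.
Set Implicit Arguments. Unset Strict Implicit. Unset Printing Implicit Defensive.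

(* Main.v *)
Require Import Defs.
From mathcomp Require Import all_boot all_order all_algebra.
From mathcomp Require Import all_classical all_reals exp.
From mathcomp Require Import topology normedtype sequences.
Import Order.TTheory GRing.Theory Num.Theory numFieldNormedType.Exports.
Local Open Scope ring_scope.
Local Open Scope classical_set_scope.

Lemma expR_ge2 (R : realType) (x : R) : 0 <= x -> 1 + x + x ^+ 2 / 2 <= expR x.
Proof.
move=> x_ge0; rewrite /expR.
pose f (i : nat) : R := (i == 0)%:R + x *+ (i == 1)%N + x ^+ 2 / 2 *+ (i == 2)%N.
have F m : (2 < m)%N -> \sum_(0 <= i < m) f i = 1 + x + x ^+ 2 / 2.
  move=> n1m.
  rewrite (@big_cat_nat _ _ _ 3)//= big_nat_recr// big_nat_recr// big_nat_recr//=.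
  rewrite big_nil big_nat_cond big1 ?addr0; last first.
    by move=> [|[|[|i]]] //= _; rewrite /f /= !mulr0n !addr0.
  by rewrite /f /=; rewrite !(mulr0n, mulr1n, addr0, add0r).
rewrite [leLHS](_ : _ = limn (series f)); last first.
  by apply/esym/(@lim_near_cst R^o) => //; near=> k; apply: F; near: k.
apply: ler_lim; first by apply: is_cvg_near_cst; near=> k; apply: F; near: k.
  exact: is_cvg_series_exp_coeff.
near=> k; apply: ler_sum => -[|[|[|i]]] _; rewrite /f /exp_coeff/=.
- by rewrite !(mulr0n, mulr1n, expr0, addr0, divr1).
- by rewrite !(mulr0n, mulr1n, expr1, addr0, add0r, divr1).
- by rewrite !(mulr0n, mulr1n, addr0, add0r).
- rewrite !(mulr0n, addr0).
  by rewrite divr_ge0// exprn_ge0.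
Unshelve. all: by end_near. Qed.
Local Close Scope classical_set_scope.
From mathcomp Require Import ring lra.

Lemma poly1 (R : realFieldType) (y : R) : 0 <= y -> y <= 1/2 ->
  1 <= (1 - y) * (1 + (y + y^+2) + (y + y^+2)^+2 / 2).
Proof. move=> h1 h2. have h3 : 0 <= 1 - y - y^+2 - y^+3 by nra.
have h4 : 0 <= y^+2 * (1 - y - y^+2 - y^+3) by apply: mulr_ge0 => //; nra.
nra. Qed.

Lemma key (R : realType) (x : R) : `|x| <= 1/2 -> expR (x - x^+2) <= 1 + x.
Proof.
move=> hx.
have EF : expR (x - x^+2) * expR (x^+2 - x) = 1.
  by rewrite -expRD (_ : _ + _ = 0) ?expR0 //; ring.
have E0 := expR_gt0 (x - x^+2). have F0 := expR_gt0 (x^+2 - x).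
have [x0|x0] := leP 0 x.
- have hx' : x <= 1/2 by rewrite -(ger0_norm x0).
  have hF : 1 + (x^+2 - x) <= expR (x^+2 - x) := expR_ge1Dx _.
  nra.
- have hx' : -x <= 1/2 by rewrite -(ltr0_norm x0).
  have hF := @expR_ge2 _ (-x + (-x)^+2).
  have hp := @poly1 _ (-x) ltac:(lra) hx'.
  have e : x^+2 - x = -x + (-x)^+2 by rewrite sqrrN addrC.
  rewrite e in EF.
  have hF' : 0 <= -x + (-x)^+2 by nra.
  have h1 := hF hF'.
  have F1 : 0 < expR (- x + (- x) ^+ 2) by apply: expR_gt0.
  move: EF h1 hp F1 E0.
  set P := 1 + _ + _. set F := expR (- x + _). set E := expR (x - _).
  move=> EF h1 hp F1 E0.
  have : (1 + x) * P <= (1 + x) * F by apply: ler_wpM2l => //; lra.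
  move=> h2.
  rewrite -subr_ge0 -(pmulr_rge0 _ F1).
  have -> : F * (1 + x - E) = (1 + x) * F - E * F by ring.
  rewrite EF subr_ge0. rewrite opprK in hp. lra.
Qed.

Theorem theorem2p3 (R : realType) (J : finType) (alpha D : R) (T : nat)
  (g wt w : nat -> J -> R) :
  (0 < #|J|)%N ->
  0 < alpha -> alpha <= 1 / 4 ->
  0 <= D ->
  (0 < T)%N ->
  ln (#|J|%:R + 5 / 2 * T%:R * D * #|J|%:R) <= alpha ^+ 2 * T%:R ->
  (forall j, w 1%N j = 1) ->
  (forall i, (1 <= i <= T)%N -> forall j, `|g i j| <= 2) ->
  (forall i, (1 <= i <= T)%N -> forall j, `|w i j - wt i j| <= D) ->
  (forall i, (1 <= i <= T)%N -> \sum_(j : J) g i j * wt i j <= 0) ->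
  (forall i, (1 <= i <= T)%N -> forall j, w i.+1 j = w i j * (1 + alpha * g i j)) ->
  forall j : J, T%:R^-1 * \sum_(1 <= i < T.+1) g i j <= 5 * alpha.
Proof.
move=> J0 a0 a4 D0 T0 hln w1 hg hD hgw hw j.
set N : R := #|J|%:R.
have N1 : 1 <= N by rewrite /N ler1n.
have Tp : 0 < (T%:R : R) by rewrite ltr0n.
have wpos : forall k, (k <= T)%N -> forall j, 0 < w k.+1 j.
  elim=> [|k IH] kT j'; first by rewrite w1.
  rewrite hw; last by rewrite kT.
  have := hg k.+1 (kT) j'.
  have := IH (ltnW kT) j'. 
  move=> h1 h2; apply: mulr_gt0 => //.
  have : `|alpha * g k.+1 j'| <= 1/2.
    rewrite normrM (gtr0_norm a0). nra.
  move=> h3. have := ler_norm (- (alpha * g k.+1 j')). rewrite normrN. lra.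
have phi : forall k, (k <= T)%N ->
    \sum_(j' : J) w k.+1 j' <= N + k%:R * (2 * alpha * D * N).
  elim=> [|k IH] kT.
    rewrite mul0r addr0 (eq_bigr (fun _ => 1)) ?sumr_const //.
  have kT' : (1 <= k.+1 <= T)%N by rewrite kT.
  rewrite (eq_bigr (fun j' => w k.+1 j' + alpha * (w k.+1 j' * g k.+1 j'))); last first.
    by move=> j' _; rewrite hw //; ring.
  rewrite big_split /= -mulr_sumr.
  have hs : \sum_(j' : J) w k.+1 j' * g k.+1 j' <= 2 * D * N.
    apply: (@le_trans _ _ (\sum_(j' : J) (g k.+1 j' * wt k.+1 j' + 2 * D))).
      apply: ler_sum => j' _.
      have e : w k.+1 j' * g k.+1 j' = g k.+1 j' * wt k.+1 j' + g k.+1 j' * (w k.+1 j' - wt k.+1 j') by ring.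
      rewrite e lerD2l.
      apply: (le_trans (ler_norm _)); rewrite normrM.
      apply: ler_pM => //; [exact: hg | exact: hD].
    rewrite big_split /= sumr_const -/N.
    have := hgw _ kT'. rewrite -[_ *+ #|J|]mulr_natr. lra.
  have := IH (ltnW kT). rewrite -natr1.
  have : alpha * \sum_(j' : J) w k.+1 j' * g k.+1 j' <= alpha * (2 * D * N).
    by apply: ler_wpM2l => //; lra.
  lra.
have low : forall k, (k <= T)%N ->
    expR (alpha * \sum_(1 <= i < k.+1) g i j - 4 * alpha^+2 * k%:R) <= w k.+1 j.
  elim=> [|k IH] kT.
    by rewrite big_geq // mulr0 mulr0 subr0 expR0 w1.
  have kT' : (1 <= k.+1 <= T)%N by rewrite kT.
  rewrite big_nat_recr //= hw // -[k.+1%:R]natr1.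
  have e : alpha * (\sum_(1 <= i < k.+1) g i j + g k.+1 j) - 4 * alpha ^+ 2 * (k%:R + 1)
     = (alpha * \sum_(1 <= i < k.+1) g i j - 4 * alpha ^+ 2 * k%:R)
       + (alpha * g k.+1 j - 4 * alpha^+2) by ring.
  rewrite e expRD.
  apply: ler_pM; [exact: expR_ge0 | exact: expR_ge0 | exact: IH (ltnW kT) |].
  have hx : `|alpha * g k.+1 j| <= 1/2.
    rewrite normrM (gtr0_norm a0). have := hg _ kT' j. nra.
  apply: (le_trans _ (@key _ _ hx)).
  rewrite ler_expR lerD2l lerN2 exprMn.
  rewrite [4 * _]mulrC. apply: ler_wpM2l; first by apply: exprn_ge0; lra.
  have := hg _ kT' j. rewrite ler_norml => /andP[h1 h2]. nra.
set S := \sum_(1 <= i < T.+1) g i j.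
have hlow := low T (leqnn T).
have hphi := phi T (leqnn T).
have wle : w T.+1 j <= \sum_(j' : J) w T.+1 j'.
  rewrite (bigD1 j) //= lerDl sumr_ge0 // => j' _; apply: ltW; exact: wpos.
set M := N + 5 / 2 * T%:R * D * N.
have M0 : 0 < M.
  rewrite /M. have : 0 <= T%:R * D * N by apply: mulr_ge0 => //; apply: mulr_ge0 => //; lra.
  lra.
have hM : N + T%:R * (2 * alpha * D * N) <= M.
  rewrite /M. have : 0 <= T%:R * D * N by apply: mulr_ge0 => //; apply: mulr_ge0 => //; lra.
  have -> : T%:R * (2 * alpha * D * N) = 2 * alpha * (T%:R * D * N) by ring.
  have -> : 5 / 2 * T%:R * D * N = 5 / 2 * (T%:R * D * N) by ring.
  move: (T%:R * D * N) => X hX. nra.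
have Mexp : M <= expR (alpha ^+ 2 * T%:R).
  by rewrite -[leLHS](@lnK R M) ?posrE // ler_expR.
have := le_trans hlow (le_trans wle (le_trans hphi (le_trans hM Mexp))).
rewrite ler_expR => h.
rewrite ler_pdivrMl //.
have : alpha * S <= alpha * (T%:R * (5 * alpha)).
  have -> : alpha * (T%:R * (5 * alpha)) = 4 * alpha ^+ 2 * T%:R + alpha ^+ 2 * T%:R by ring.
  rewrite /S; lra.
by rewrite ler_pM2l.
Qed.
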